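(* For all positive reals $a,b$, the function $s\mapsto \lambda_s(a,b)$ is monotone increasing on $\mathbb{R}$.
   Context: For $a,b>0$ with $a\neq b$ define $$\lambda_s(a,b)=\begin{cases}\dfrac{s-1}{s+1}\cdot\dfrac{a^{s+1}+b^{s+1}-2\left(\frac{a+b}{2}\right)^{s+1}}{a^s+b^s-2\left(\frac{a+b}{2}\right)^s}, & s\in\mathbb{R}\setminus\{-1,0,1\},\\[3mm] \dfrac{2\log\frac{a+b}{2}-\log a-\log b}{\frac{1}{2a}+\frac{1}{2b}-\frac{2}{a+b}}, & s=-1,\\[3mm] \dfrac{a\log a+b\log b-(a+b)\log\frac{a+b}{2}}{2\log\frac{a+b}{2}-\log a-\log b}, & s=0,\\[3mm] \dfrac{(b-a)^2}{4\left(a\log a+b\log b-(a+b)\log\frac{a+b}{2}\right)}, & s=1,\end{cases}$$ and $\lambda_s(a,a)=a$. (Equivalently $\lambda_s(a,b)=\bar f_{s+1}(a,b)/\bar f_s(a,b)$ where $\bar f(a,b)=f(a)+f(b)-2f(\frac{a+b}{2})$ and $f_s$ is the convex function with $f_s''(t)=t^{s-2}$ given by $f_s(t)=(t^s-st+s-1)/(s(s-1))$ for $s\ne0,1$, $f_0(t)=t-\log t-1$, $f_1(t)=t\log t-t+1$.) *)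

(* Defs.v *)
From Stdlib Require Import Reals Lra.
Open Scope R_scope.

Definition amean (a b : R) : R := (a + b) / 2.

Definition lambda (s a b : R) : R :=
  if Req_EM_T a b then a
  else if Req_EM_T s (-1) then
    (2 * ln (amean a b) - ln a - ln b) /
    (1 / (2 * a) + 1 / (2 * b) - 2 / (a + b))
  else if Req_EM_T s 0 then
    (a * ln a + b * ln b - (a + b) * ln (amean a b)) /
    (2 * ln (amean a b) - ln a - ln b)
  else if Req_EM_T s 1 then
    (b - a) ^ 2 / (4 * (a * ln a + b * ln b - (a + b) * ln (amean a b)))
  else
    (s - 1) / (s + 1) *
    ((Rpower a (s + 1) + Rpower b (s + 1) - 2 * Rpower (amean a b) (s + 1)) /
     (Rpower a s + Rpower b s - 2 * Rpower (amean a b) s)).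

(* Main.v *)
Require Import Defs.
From Stdlib Require Import Reals Lra.
From Coquelicot Require Import Coquelicot.
Open Scope R_scope.

Lemma der_val (f : R -> R) (x l l' : R) : is_derive f x l -> l = l' -> is_derive f x l'.
Proof. intros H ->; exact H. Qed.

Lemma taylor_left (a m : R) (f f1 g : R -> R) : a <= m ->
  (forall x, a <= x <= m -> is_derive f x (f1 x) /\ is_derive f1 x (g x) /\ continuous g x) ->
  RInt (fun x => g x * (x - a)) a m = (m - a) * f1 m - f m + f a.
Proof.
  intros Ham H.
  assert (Hi : is_RInt (fun x => g x * (x - a)) a m
     (minus ((fun x => (x - a) * f1 x - f x) m) ((fun x => (x - a) * f1 x - f x) a))).
  { apply (is_RInt_derive (fun x => (x - a) * f1 x - f x)).
    - intros x Hx. rewrite Rmin_left in Hx by lra. rewrite Rmax_right in Hx by lra.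
      destruct (H x Hx) as [H1 [H2 H3]].
      eapply der_val.
      + apply (is_derive_minus (fun x => (x - a) * f1 x) f).
        * apply (is_derive_mult (fun x => x - a) f1).
          -- apply (is_derive_minus (fun x => x) (fun _ => a)).
             apply is_derive_id. apply is_derive_const.
          -- exact H2.
          -- intros; apply Rmult_comm.
        * exact H1.
      + simpl. unfold minus, plus, mult, opp, one, zero; simpl. ring.
    - intros x Hx. rewrite Rmin_left in Hx by lra. rewrite Rmax_right in Hx by lra.
      destruct (H x Hx) as [H1 [H2 H3]].
      apply (continuous_mult g (fun x => x - a)). exact H3.
      apply (continuous_minus (fun x => x) (fun _ => a)).
      apply continuous_id. apply continuous_const. }
  rewrite (is_RInt_unique _ _ _ _ Hi). simpl.
  unfold minus, plus, opp; simpl. ring.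
Qed.

Lemma taylor_right (m b : R) (f f1 g : R -> R) : m <= b ->
  (forall x, m <= x <= b -> is_derive f x (f1 x) /\ is_derive f1 x (g x) /\ continuous g x) ->
  RInt (fun x => g x * (b - x)) m b = f b - (b - m) * f1 m - f m.
Proof.
  intros Ham H.
  assert (Hi : is_RInt (fun x => g x * (b - x)) m b
     (minus ((fun x => (b - x) * f1 x + f x) b) ((fun x => (b - x) * f1 x + f x) m))).
  { apply (is_RInt_derive (fun x => (b - x) * f1 x + f x)).
    - intros x Hx. rewrite Rmin_left in Hx by lra. rewrite Rmax_right in Hx by lra.
      destruct (H x Hx) as [H1 [H2 H3]].
      eapply der_val.
      + apply (is_derive_plus (fun x => (b - x) * f1 x) f).
        * apply (is_derive_mult (fun x => b - x) f1).
          -- apply (is_derive_minus (fun _ => b) (fun x => x)).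
             apply is_derive_const. apply is_derive_id.
          -- exact H2.
          -- intros; apply Rmult_comm.
        * exact H1.
      + simpl. unfold minus, plus, mult, opp, one, zero; simpl. ring.
    - intros x Hx. rewrite Rmin_left in Hx by lra. rewrite Rmax_right in Hx by lra.
      destruct (H x Hx) as [H1 [H2 H3]].
      apply (continuous_mult g (fun x => b - x)). exact H3.
      apply (continuous_minus (fun _ => b) (fun x => x)).
      apply continuous_const. apply continuous_id. }
  rewrite (is_RInt_unique _ _ _ _ Hi). simpl.
  unfold minus, plus, opp; simpl. ring.
Qed.


Definition Mk (a b : R) (g : R -> R) : R :=
  RInt (fun x => g x * (x - a)) a (amean a b) + RInt (fun x => g x * (b - x)) (amean a b) b.

Definition F (a b s : R) : R := Mk a b (fun x => Rpower x (s - 2)).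

Lemma Mk_taylor (a b : R) (f f1 g : R -> R) : 0 < a < b ->
  (forall x, a <= x <= b -> is_derive f x (f1 x) /\ is_derive f1 x (g x) /\ continuous g x) ->
  Mk a b g = f a + f b - 2 * f (amean a b).
Proof.
  intros Hab H. unfold Mk.
  rewrite (taylor_left a (amean a b) f f1 g).
  rewrite (taylor_right (amean a b) b f f1 g).
  replace (b - amean a b) with (amean a b - a) by (unfold amean; lra). ring.
  unfold amean; lra. intros x Hx; apply H; unfold amean in Hx; lra.
  unfold amean; lra. intros x Hx; apply H; unfold amean in Hx; lra.
Qed.

Lemma dpow (r x : R) : 0 < x -> is_derive (fun x => Rpower x r) x (r * Rpower x (r - 1)).
Proof. intros Hx. apply is_derive_Reals, derivable_pt_lim_power, Hx. Qed.

Lemma cpow (r x : R) : 0 < x -> continuous (fun x => Rpower x r) x.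
Proof. intros Hx. apply (ex_derive_continuous (fun x => Rpower x r)). eexists. apply dpow, Hx. Qed.

Lemma F_gen (a b s : R) : 0 < a < b -> s <> 0 -> s <> 1 ->
  F a b s = (Rpower a s + Rpower b s - 2 * Rpower (amean a b) s) / (s * (s - 1)).
Proof.
  intros Hab H0 H1. unfold F.
  rewrite (Mk_taylor a b (fun x => / (s * (s - 1)) * Rpower x s)
                         (fun x => / (s - 1) * Rpower x (s - 1))).
  - field. split; lra.
  - exact Hab.
  - intros x Hx. assert (0 < x) by lra. split; [|split].
    + eapply der_val. apply is_derive_scal, dpow; lra. field. split; lra.
    + eapply der_val. apply is_derive_scal, dpow; lra.
      replace (s - 1 - 1) with (s - 2) by ring. field. lra.
    + apply cpow; lra.
Qed.

Lemma pow_m2 (x : R) : 0 < x -> Rpower x (0 - 2) = / x ^ 2.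
Proof. intros Hx. replace (0 - 2) with (- INR 2) by (simpl; ring).
  rewrite Rpower_Ropp, Rpower_pow; auto. Qed.

Lemma pow_m1 (x : R) : 0 < x -> Rpower x (1 - 2) = / x.
Proof. intros Hx. replace (1 - 2) with (- (1)) by ring.
  rewrite Rpower_Ropp, Rpower_1; auto. Qed.

Lemma F_0 (a b : R) : 0 < a < b ->
  F a b 0 = 2 * ln (amean a b) - ln a - ln b.
Proof.
  intros Hab. unfold F.
  rewrite (Mk_taylor a b (fun x => - ln x) (fun x => - / x)).
  - ring.
  - exact Hab.
  - intros x Hx. assert (0 < x) by lra. split; [|split].
    + auto_derive. lra. field. lra.
    + auto_derive. lra. rewrite pow_m2 by lra. field. lra.
    + apply cpow; lra.
Qed.

Lemma F_1 (a b : R) : 0 < a < b ->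
  F a b 1 = a * ln a + b * ln b - (a + b) * ln (amean a b).
Proof.
  intros Hab. unfold F.
  rewrite (Mk_taylor a b (fun x => x * ln x) (fun x => ln x + 1)).
  - unfold amean. field.
  - exact Hab.
  - intros x Hx. assert (0 < x) by lra. split; [|split].
    + auto_derive. lra. field. lra.
    + auto_derive. lra. rewrite pow_m1 by lra. field. lra.
    + apply cpow; lra.
Qed.

Definition cont (a b : R) (g : R -> R) := forall x, a <= x <= b -> continuous g x.

Lemma exL (a b : R) (g : R -> R) : a < b -> cont a b g ->
  ex_RInt (fun x => g x * (x - a)) a (amean a b).
Proof.
  intros Hab Hc. apply (ex_RInt_continuous (V:=R_CompleteNormedModule)). intros z Hz.
  rewrite Rmin_left in Hz by (unfold amean; lra). rewrite Rmax_right in Hz by (unfold amean; lra).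
  apply (continuous_mult g (fun x => x - a)). apply Hc. unfold amean in Hz; lra.
  apply (continuous_minus (fun x => x) (fun _ => a)).
  apply continuous_id. apply continuous_const.
Qed.

Lemma exR (a b : R) (g : R -> R) : a < b -> cont a b g ->
  ex_RInt (fun x => g x * (b - x)) (amean a b) b.
Proof.
  intros Hab Hc. apply (ex_RInt_continuous (V:=R_CompleteNormedModule)). intros z Hz.
  rewrite Rmin_left in Hz by (unfold amean; lra). rewrite Rmax_right in Hz by (unfold amean; lra).
  apply (continuous_mult g (fun x => b - x)). apply Hc. unfold amean in Hz; lra.
  apply (continuous_minus (fun _ => b) (fun x => x)).
  apply continuous_const. apply continuous_id.
Qed.

Lemma Mk_lin (a b k : R) (g1 g2 : R -> R) : a < b -> cont a b g1 -> cont a b g2 ->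
  Mk a b (fun x => g1 x + k * g2 x) = Mk a b g1 + k * Mk a b g2.
Proof.
  intros Hab H1 H2. unfold Mk.
  rewrite (RInt_ext (V:=R_CompleteNormedModule) (fun x => (g1 x + k * g2 x) * (x - a))
             (fun x => plus (g1 x * (x - a)) (scal k (g2 x * (x - a))))).
  2:{ intros; unfold plus, scal; simpl; unfold mult; simpl; ring. }
  rewrite (RInt_ext (V:=R_CompleteNormedModule) (fun x => (g1 x + k * g2 x) * (b - x))
             (fun x => plus (g1 x * (b - x)) (scal k (g2 x * (b - x))))).
  2:{ intros; unfold plus, scal; simpl; unfold mult; simpl; ring. }
  rewrite !(RInt_plus (V:=R_CompleteNormedModule)), !(RInt_scal (V:=R_CompleteNormedModule)).
  - unfold plus, scal; simpl; unfold mult; simpl; ring.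
  - exact (exR a b g2 Hab H2).
  - exact (exL a b g2 Hab H2).
  - exact (exR a b g1 Hab H1).
  - apply (ex_RInt_scal (V:=R_CompleteNormedModule)). exact (exR a b g2 Hab H2).
  - exact (exL a b g1 Hab H1).
  - apply (ex_RInt_scal (V:=R_CompleteNormedModule)). exact (exL a b g2 Hab H2).
Qed.


Lemma Mk_ge0 (a b : R) (g : R -> R) : a < b -> cont a b g ->
  (forall x, a <= x <= b -> 0 <= g x) -> 0 <= Mk a b g.
Proof.
  intros Hab Hc Hg. unfold Mk. apply Rplus_le_le_0_compat.
  - apply RInt_ge_0. unfold amean; lra. apply exL; auto.
    intros x Hx. apply Rmult_le_pos. apply Hg; unfold amean in Hx; lra. lra.
  - apply RInt_ge_0. unfold amean; lra. apply exR; auto.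
    intros x Hx. apply Rmult_le_pos. apply Hg; unfold amean in Hx; lra. lra.
Qed.

Lemma Mk_gt0 (a b : R) (g : R -> R) : a < b -> cont a b g ->
  (forall x, a <= x <= b -> 0 < g x) -> 0 < Mk a b g.
Proof.
  intros Hab Hc Hg. unfold Mk.
  assert (Z : forall u v, RInt (fun _ => 0) u v = 0).
  { intros; rewrite RInt_const; unfold scal; simpl; unfold mult; simpl; ring. }
  apply Rplus_lt_0_compat.
  - rewrite <- (Z a (amean a b)). apply RInt_lt. unfold amean; lra.
    + intros x Hx. apply (continuous_mult g (fun x => x - a)). apply Hc. unfold amean in Hx; lra.
      apply (continuous_minus (fun x => x) (fun _ => a)).
      apply continuous_id. apply continuous_const.
    + intros; apply continuous_const.
    + intros x Hx. apply Rmult_lt_0_compat. apply Hg; unfold amean in Hx; lra. lra.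
  - rewrite <- (Z (amean a b) b). apply RInt_lt. unfold amean; lra.
    + intros x Hx. apply (continuous_mult g (fun x => b - x)). apply Hc. unfold amean in Hx; lra.
      apply (continuous_minus (fun _ => b) (fun x => x)).
      apply continuous_const. apply continuous_id.
    + intros; apply continuous_const.
    + intros x Hx. apply Rmult_lt_0_compat. apply Hg; unfold amean in Hx; lra. lra.
Qed.

Lemma cont_pow (a b r : R) : 0 < a -> cont a b (fun x => Rpower x r).
Proof. intros Ha x Hx. apply cpow; lra. Qed.

Lemma F_pos (a b s : R) : 0 < a < b -> 0 < F a b s.
Proof.
  intros Hab. unfold F. apply Mk_gt0. lra. apply cont_pow; lra.
  intros; apply exp_pos.
Qed.

Lemma cont_lin (a b k : R) (g1 g2 : R -> R) : cont a b g1 -> cont a b g2 ->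
  cont a b (fun x => g1 x + k * g2 x).
Proof.
  intros H1 H2 x Hx. apply (continuous_plus g1 (fun x => k * g2 x)). auto.
  apply (continuous_mult (fun _ => k) g2). apply continuous_const. auto.
Qed.

Lemma cheb_pt (x c d : R) : 0 < x -> 0 < c -> 0 <= d ->
  0 <= (x - c) * (Rpower x d - Rpower c d).
Proof.
  intros Hx Hc Hd. destruct (Rle_dec x c).
  - assert (Rpower x d <= Rpower c d) by (apply Rle_Rpower_l; lra). nra.
  - assert (Rpower c d <= Rpower x d) by (apply Rle_Rpower_l; lra). nra.
Qed.

Lemma ratio_mono (a b s t : R) : 0 < a < b -> s <= t ->
  F a b (s + 1) / F a b s <= F a b (t + 1) / F a b t.
Proof.
  intros Hab Hst.
  pose proof (F_pos a b s Hab) as P0. pose proof (F_pos a b (s+1) Hab) as P1.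
  pose proof (F_pos a b t Hab) as Q0. pose proof (F_pos a b (t+1) Hab) as Q1.
  set (c := F a b (s + 1) / F a b s).
  assert (Hc : 0 < c) by (unfold c; apply Rdiv_lt_0_compat; lra).
  set (d := t - s).
  set (cd := Rpower c d).
  assert (Hge : 0 <= Mk a b (fun x => Rpower x (s - 2) * ((x - c) * (Rpower x d - cd)))).
  { apply Mk_ge0. lra.
    - intros x Hx. apply (continuous_mult (fun x => Rpower x (s - 2))).
      apply cpow; lra.
      apply (continuous_mult (fun x => x - c)).
      apply (continuous_minus (fun x => x) (fun _ => c)).
      apply continuous_id. apply continuous_const.
      apply (continuous_minus (fun x => Rpower x d) (fun _ => cd)).
      apply cpow; lra. apply continuous_const.
    - intros x Hx. apply Rmult_le_pos. left; apply exp_pos.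
      apply cheb_pt; unfold d; lra. }
  assert (Heq : Mk a b (fun x => Rpower x (s - 2) * ((x - c) * (Rpower x d - cd)))
     = Mk a b (fun x => Rpower x (t + 1 - 2) + (- c) * (Rpower x (t - 2)
         + (cd / c) * (Rpower x (s + 1 - 2) + (- c) * Rpower x (s - 2))))).
  { unfold Mk. f_equal; apply RInt_ext; intros x Hx;
      rewrite Rmin_left in Hx by (unfold amean; lra); rewrite Rmax_right in Hx by (unfold amean; lra);
      assert (Hx0 : 0 < x) by (unfold amean in Hx; lra);
      f_equal;
      replace (t + 1 - 2) with ((s - 2) + d + 1) by (unfold d; ring);
      replace (t - 2) with ((s - 2) + d) by (unfold d; ring);
      replace (s + 1 - 2) with ((s - 2) + 1) by ring;
      rewrite !Rpower_plus, Rpower_1 by lra; field; lra. }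
  rewrite Heq in Hge.
  rewrite Mk_lin in Hge. rewrite Mk_lin in Hge. rewrite Mk_lin in Hge.
  all: try lra.
  all: repeat (apply cont_lin || (apply cont_pow; lra)).
  fold (F a b (t + 1)) (F a b t) (F a b (s + 1)) (F a b s) in Hge.
  assert (Hcs : c * F a b s = F a b (s + 1)) by (unfold c; field; lra).
  assert (Hz : F a b (s + 1) + - c * F a b s = 0) by lra.
  rewrite Hz, Rmult_0_r, Rplus_0_r in Hge.
  unfold Rdiv; apply (Rmult_le_reg_r (F a b t)); [lra|].
  rewrite Rmult_assoc, Rinv_l, Rmult_1_r by lra. nra.
Qed.

Lemma rp_m1 (x : R) : 0 < x -> Rpower x (-1) = / x.
Proof. intros Hx. replace (-1) with (- (1)) by ring.
  rewrite Rpower_Ropp, Rpower_1; auto. Qed.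

Lemma rp2 (x : R) : 0 < x -> Rpower x 2 = x ^ 2.
Proof. intros Hx. replace 2 with (INR 2) by (simpl; ring). apply Rpower_pow, Hx. Qed.

Lemma lambda_F (a b s : R) : 0 < a < b -> lambda s a b = F a b (s + 1) / F a b s.
Proof.
  intros Hab. unfold lambda.
  destruct (Req_EM_T a b) as [E|_]; [lra|].
  destruct (Req_EM_T s (-1)) as [E1|N1].
  { subst s. replace (-1 + 1) with 0 by ring. rewrite <- F_0 by lra.
    assert (HD : 1 / (2 * a) + 1 / (2 * b) - 2 / (a + b) = F a b (-1)).
    { rewrite F_gen by lra. rewrite !rp_m1; unfold amean; try lra. field. lra. }
    rewrite HD. reflexivity. }
  destruct (Req_EM_T s 0) as [E0|N0].
  { subst s. replace (0 + 1) with 1 by ring. rewrite <- F_0, <- F_1 by lra. reflexivity. }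
  destruct (Req_EM_T s 1) as [E2|N2].
  { subst s. replace (1 + 1) with 2 by ring. rewrite <- F_1 by lra.
    pose proof (F_pos a b 1 Hab).
    rewrite (F_gen a b 2) by lra. rewrite !rp2; unfold amean; try lra. field. lra. }
  pose proof (F_pos a b s Hab) as P.
  rewrite (F_gen a b s) in P |- * by lra.
  rewrite (F_gen a b (s + 1)) by lra.
  replace (s + 1 - 1) with s by ring.
  assert (HA : Rpower a s + Rpower b s - 2 * Rpower (amean a b) s <> 0).
  { intro Z. rewrite Z in P. unfold Rdiv in P. rewrite Rmult_0_l in P. lra. }
  field. repeat split; lra.
Qed.

Lemma lambda_sym (a b s : R) : lambda s a b = lambda s b a.
Proof.
  unfold lambda.
  assert (Hm : amean b a = amean a b) by (unfold amean; field).
  rewrite Hm, (Rplus_comm b a).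
  destruct (Req_EM_T a b) as [E|N]; destruct (Req_EM_T b a) as [E'|N']; try lra.
  destruct (Req_EM_T s (-1)).
  { f_equal; lra. }
  destruct (Req_EM_T s 0).
  { f_equal; lra. }
  destruct (Req_EM_T s 1).
  { f_equal. ring. f_equal. lra. }
  f_equal. f_equal; lra.
Qed.

Theorem theorem3 (a b : R) (ha : 0 < a) (hb : 0 < b) :
  forall s t : R, s <= t -> lambda s a b <= lambda t a b.
Proof.
  intros s t Hst.
  destruct (Rtotal_order a b) as [H|[H|H]].
  - rewrite !lambda_F by lra. apply ratio_mono; lra.
  - subst b. unfold lambda. destruct (Req_EM_T a a); [lra|congruence].
  - rewrite (lambda_sym a b s), (lambda_sym a b t).
    rewrite !lambda_F by lra. apply ratio_mono; lra.
Qed.
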